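(* Let $M$ be a finite regular cell complex with weights $w_\sigma>0$ on its cells, and let $d\ge 1$. For every combinatorial differential $d$-form $\omega\in\Omega^d(M)$, $$d^*\omega = p\big(\partial^*\circ\omega - (-1)^{d-1}\,\omega\circ\partial^*\big),$$ where $p$ is the orthogonal projection from the space of linear maps $C_*(M)\to C_*(M)$ of degree $d-1$ onto $\Omega^{d-1}(M)$.
   Context: $C_*(M)=\bigoplus_p C_p(M)$ is the real cellular chain complex of $M$ with boundary $\partial$, each cell carrying a fixed orientation; $C_p(M)=0$ for $p<0$ or $p>\dim M$. Inner product on $C_*(M)$: $\langle\sigma,\sigma'\rangle=\delta_{\sigma,\sigma'}w_\sigma$ for oriented cells $\sigma,\sigma'$; $\partial^*$ is the adjoint of $\partial$ with respect to it. A linear map $\omega:C_*(M)\to C_*(M)$ has degree $d$ if $\omega(C_p(M))\subset C_{p-d}(M)$ for all $p$; it is local if for each oriented $p$-cell $\alpha$, $\omega(\alpha)$ is a linear combination of $(p-d)$-cells that are faces of $\alpha$. $\Omega^d(M)$ is the space of local linear maps of degree $d$ (combinatorial differential $d$-forms). On linear maps of degree $d$ define the $L^2$ inner product $\langle u,v\rangle=\sum_\sigma \frac{1}{w_\sigma}\langle u(\sigma),v(\sigma)\rangle$ (sum over all cells). The differential $d:\Omega^{d-1}(M)\to\Omega^{d}(M)$ is $dv=\partial\circ v-(-1)^{d-1}v\circ\partial$, and $d^*:\Omega^d(M)\to\Omega^{d-1}(M)$ is its adjoint: $\langle d^*u,v\rangle=\langle u,dv\rangle$ for all $u\in\Omega^d(M)$,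 $v\in\Omega^{d-1}(M)$. *)

(* Defs.v *)
From mathcomp Require Import all_boot all_order all_algebra.
Set Implicit Arguments. Unset Strict Implicit. Unset Printing Implicit Defensive.
Import Order.TTheory GRing.Theory Num.Theory.
Local Open Scope ring_scope.

(* Cells of M are indexed by 'I_n.  A linear map u : C_*(M) -> C_*(M) is
   represented by its coefficient matrix U : 'M[R]_n, in column convention:
   U tau sigma = coefficient of the oriented cell tau in u(sigma).
   Composition u \o v is U *m V; chains are column vectors 'cV_n. *)

Section CellComplex.
Variables (R : realFieldType) (n : nat).
Implicit Types (U V : 'M[R]_n) (x y : 'cV[R]_n).

Definition chain_ip (w : 'I_n -> R) x y : R := \sum_i w i * x i 0 * y i 0.

Definition map_ip (w : 'I_n -> R) U V : R :=
  \sum_s (w s)^-1 * chain_ip w (col s U) (col s V).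

(* U has degree k : maps C_p into C_{p-k} (C_q = 0 for q < 0). *)
Definition has_degree (dim : 'I_n -> nat) (k : nat) U : Prop :=
  forall t s, U t s != 0 -> (dim t + k)%N = dim s.

(* U is local of degree k (an element of Omega^k(M)); face t s means
   "t is a face of s" (reflexive face relation of the face poset). *)
Definition is_form (dim : 'I_n -> nat) (face : rel 'I_n) (k : nat) U : Prop :=
  forall t s, U t s != 0 -> face t s /\ (dim t + k)%N = dim s.

(* Combinatorial data of a finite regular cell complex: face poset graded by
   dimension, boundary matrix B (B t s = incidence number [s : t]) with
   incidence numbers +-1 exactly on codimension-one faces, and B o B = 0. *)
Definition regular_cell_complex (dim : 'I_n -> nat) (face : rel 'I_n) (B : 'M[R]_n)
  : Prop :=
  [/\ [/\ reflexive face, antisymmetric face & transitive face],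
      (forall t s, face t s -> t != s -> (dim t < dim s)%N),
      (forall t s, B t s != 0 -> face t s /\ (dim t).+1 = dim s),
      (forall t s, face t s -> (dim t).+1 = dim s -> B t s = 1 \/ B t s = -1)
    & B *m B = 0].

Definition dform (B : 'M[R]_n) (k : nat) V : 'M[R]_n :=
  B *m V - (-1) ^+ k.-1 *: (V *m B).

End CellComplex.

(* Main.v *)
Require Import Defs.
From mathcomp Require Import all_boot all_order all_algebra.
From mathcomp Require Import ring zify.
Import Order.TTheory GRing.Theory Num.Theory.
Local Open Scope ring_scope.

Section Aux.
Variables (R : realFieldType) (n : nat) (w : 'I_n -> R).

Lemma map_ipE (U V : 'M[R]_n) :
  map_ip w U V = \sum_s \sum_i (w s)^-1 * (w i * U i s * V i s).
Proof.
rewrite /map_ip /chain_ip; apply eq_bigr => s _; rewrite mulr_sumr.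
by apply eq_bigr => i _; rewrite !mxE.
Qed.

Lemma map_ipB (U U' V : 'M[R]_n) :
  map_ip w (U - U') V = map_ip w U V - map_ip w U' V.
Proof.
rewrite !map_ipE -sumrB; apply eq_bigr => s _; rewrite -sumrB.
apply eq_bigr => i _; rewrite !mxE; ring.
Qed.

Lemma map_ipBr (U V V' : 'M[R]_n) :
  map_ip w U (V - V') = map_ip w U V - map_ip w U V'.
Proof.
rewrite !map_ipE -sumrB; apply eq_bigr => s _; rewrite -sumrB.
apply eq_bigr => i _; rewrite !mxE; ring.
Qed.

Lemma map_ipZ (a : R) (U V : 'M[R]_n) :
  map_ip w (a *: U) V = a * map_ip w U V.
Proof.
rewrite !map_ipE mulr_sumr; apply eq_bigr => s _; rewrite mulr_sumr.
apply eq_bigr => i _; rewrite !mxE; ring.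
Qed.

Lemma map_ipZr (a : R) (U V : 'M[R]_n) :
  map_ip w U (a *: V) = a * map_ip w U V.
Proof.
rewrite !map_ipE mulr_sumr; apply eq_bigr => s _; rewrite mulr_sumr.
apply eq_bigr => i _; rewrite !mxE; ring.
Qed.

Lemma map_ip_def (U : 'M[R]_n) : (forall s, 0 < w s) ->
  map_ip w U U = 0 -> U = 0.
Proof.
move=> Hw; rewrite map_ipE => H0.
have Hge : forall s, 0 <= \sum_i (w s)^-1 * (w i * U i s * U i s).
  move=> s; apply: sumr_ge0 => i _; apply: mulr_ge0.
    by rewrite invr_ge0 ltW.
  by rewrite -mulrA; apply: mulr_ge0; [exact: ltW | rewrite -expr2 sqr_ge0].
apply/matrixP => i s; rewrite mxE.
have := psumr_eq0P (fun s _ => Hge s) H0 (i:=s) isT.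
have Hge2 : forall i, 0 <= (w s)^-1 * (w i * U i s * U i s).
  move=> j; apply: mulr_ge0; first by rewrite invr_ge0 ltW.
  by rewrite -mulrA; apply: mulr_ge0; [exact: ltW | rewrite -expr2 sqr_ge0].
move=> H1; have := psumr_eq0P (fun j _ => Hge2 j) H1 (i:=i) isT.
move/eqP; rewrite !mulf_eq0 invr_eq0 (gt_eqF (Hw s)) (gt_eqF (Hw i)) /=.
by rewrite orbb => /eqP.
Qed.

End Aux.

Theorem lemma2p4 (R : realFieldType) (n : nat)
  (dim : 'I_n -> nat) (face : rel 'I_n) (B : 'M[R]_n) (w : 'I_n -> R)
  (HM : regular_cell_complex dim face B)
  (Hw : forall s, 0 < w s)
  (d : nat) (hd : (1 <= d)%N)
  (* Bs is the adjoint del^* of del w.r.t. the weighted inner product *)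
  (Bs : 'M[R]_n)
  (HBs : forall x y : 'cV[R]_n, chain_ip w (Bs *m x) y = chain_ip w x (B *m y))
  (* dstar is the adjoint d^* : Omega^d -> Omega^{d-1} of d *)
  (dstar : 'M[R]_n -> 'M[R]_n)
  (Hdstar : forall U, is_form dim face d U ->
     is_form dim face d.-1 (dstar U) /\
     forall V, is_form dim face d.-1 V ->
       map_ip w (dstar U) V = map_ip w U (dform B d V))
  (* p is the orthogonal projection of degree-(d-1) maps onto Omega^{d-1} *)
  (p : 'M[R]_n -> 'M[R]_n)
  (Hp : forall U, has_degree dim d.-1 U ->
     is_form dim face d.-1 (p U) /\
     forall V, is_form dim face d.-1 V -> map_ip w (U - p U) V = 0)
  (omega : 'M[R]_n) (Homega : is_form dim face d omega) :
  dstar omega = p (Bs *m omega - (-1) ^+ d.-1 *: (omega *m Bs)).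
Proof.
have E : forall k j, w k * Bs k j = w j * B j k.
  move=> k j; have := HBs (delta_mx j 0) (delta_mx k 0).
  have c1 : forall (M : 'M[R]_n) a b, (M *m (delta_mx b 0 : 'cV[R]_n)) a 0 = M a b.
    move=> M a b; rewrite mxE (bigD1 b) //= big1 ?addr0.
      by rewrite mxE !eqxx mulr1.
    by move=> i /negbTE Hi; rewrite mxE Hi mulr0.
  rewrite /chain_ip (bigD1 k) //= big1; last first.
    by move=> i /negbTE Hi; rewrite !mxE Hi /= mulr0.
  rewrite [X in _ = X](bigD1 j) //= big1; last first.
    by move=> i /negbTE Hi; rewrite !mxE Hi /= mulr0 mul0r.
  by rewrite !c1 !mxE !eqxx /= !addr0 !mulr1.
have wn0 : forall s, w s != 0 by move=> s; rewrite gt_eqF.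
have BsB : forall t k, Bs t k != 0 -> B k t != 0.
  move=> t k H; apply/eqP => H0; move/eqP: H; apply.
  by have := E t k; rewrite H0 mulr0 => /eqP; rewrite mulf_eq0 (negbTE (wn0 t)) => /eqP.
case: HM => _ _ HB _ _.
have adj1 : forall U V, map_ip w U (B *m V) = map_ip w (Bs *m U) V.
  move=> U V; rewrite !map_ipE; apply eq_bigr => s _.
  under eq_bigr => i _ do rewrite mxE !(big_distrr, big_distrl) /=.
  under [RHS]eq_bigr => i _ do rewrite mxE !(big_distrr, big_distrl) /=.
  rewrite [RHS]exchange_big; apply eq_bigr => i _; apply eq_bigr => k _ /=.
  have -> : w k * (Bs k i * U i s) = (w k * Bs k i) * U i s by ring.
  rewrite E; ring.
have adj2 : forall U V, map_ip w U (V *m B) = map_ip w (U *m Bs) V.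
  move=> U V; rewrite !map_ipE.
  under eq_bigr => s _ do under eq_bigr => i _ do rewrite mxE !(big_distrr, big_distrl) /=.
  under [RHS]eq_bigr => s _ do under eq_bigr => i _ do rewrite mxE !(big_distrr, big_distrl) /=.
  under [RHS]eq_bigr => s _ do rewrite exchange_big.
  rewrite [RHS]exchange_big /=.
  under [RHS]eq_bigr => s _ do rewrite exchange_big.
  apply eq_bigr => s _; apply eq_bigr => i _; apply eq_bigr => k _ /=.
  have E' : Bs s k = w k * B k s / w s.
    by rewrite -E mulrC mulrA mulVf ?mul1r.
  rewrite E'; field; exact/andP.
set sg := (-1) ^+ d.-1 : R.
set X := Bs *m omega - sg *: (omega *m Bs).
have nz_sum : forall (F : 'I_n -> R), \sum_k F k != 0 -> exists k, F k != 0.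
  move=> F; case: (pickP (fun k => F k != 0)) => [k Hk|H] H0; first by exists k.
  by move: H0; rewrite big1 ?eqxx // => k _; apply/eqP; move: (H k) => /negbFE.
have degX : has_degree dim d.-1 X.
  move=> t s; rewrite !mxE => Hts.
  have [Ha|Hb] : \sum_k Bs t k * omega k s != 0 \/ \sum_k omega t k * Bs k s != 0.
    case: (eqVneq (\sum_k Bs t k * omega k s) 0) => Ha; last by left.
    right; apply/eqP => Hb; move/eqP: Hts; apply; rewrite Ha Hb; ring.
  - move: Ha => /nz_sum [k]; rewrite mulf_eq0 negb_or => /andP[H1 H2].
    have [_ h1] := HB _ _ (BsB _ _ H1).
    have [_ h2] := Homega _ _ H2.
    lia.
  - move: Hb => /nz_sum [k]; rewrite mulf_eq0 negb_or => /andP[H1 H2].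
    have [_ h1] := HB _ _ (BsB _ _ H2).
    have [_ h2] := Homega _ _ H1.
    lia.
have [fp hp] := Hp X degX.
have [fd hd'] := Hdstar omega Homega.
have form_sub : forall U V : 'M[R]_n, is_form dim face d.-1 U -> is_form dim face d.-1 V ->
    is_form dim face d.-1 (U - V).
  move=> U V hU hV t s; rewrite !mxE => H.
  case: (eqVneq (U t s) 0) => HU; last exact: hU.
  apply: hV; apply/eqP => HV; move/eqP: H; apply; by rewrite HU HV subr0.
have key : forall V, is_form dim face d.-1 V ->
    map_ip w (dstar omega) V = map_ip w (p X) V.
  move=> V hV; rewrite hd' // /dform map_ipBr map_ipZr adj1 adj2.
  have := hp V hV; rewrite map_ipB => /eqP; rewrite subr_eq0 => /eqP <-.
  by rewrite /X map_ipB map_ipZ.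
apply/eqP; rewrite -subr_eq0; apply/eqP; apply: (@map_ip_def _ _ w) => //.
by rewrite map_ipB key ?subrr //; apply: form_sub.
Qed.
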